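(* Let $\sqrt{D}=y_1\dots y_s$ be a primitive cycle (orientation string) of fixed length $s$. For a given digraph cycle $C$ of length $m$ (given by its orientation string), the following hold. (1) One can find the largest integer $R$ such that $\sqrt{D}^R\leq^* C$ in time $O(m)$ and space $O(\log m)$. (2) One can find the largest integer $R$ such that $\sigma^i(\sqrt{D})^R\leq^* C$ for some $i\in\{0,\dots,s-1\}$ in time $O(sm)$ and space $O(\log m)$. (3) For a given integer $r$, one can find the set $\Gamma$ of those $i\in\{0,\dots,s-1\}$ such that $\sigma^i(\sqrt{D})^r\,y_{i+1}\leq^* C$ in time $O(sm)$ and space $O(s\log s+\log m)$.
   Context: A digraph cycle $C=c_0c_1\dots c_{m-1}c_0$ is represented by its orientation string $x_1\dots x_m$ over $\{+,-,*\}$, where $x_k$ is $+$, $-$ or $*$ according as the edge $c_{k-1}c_k$ is a forward arc only, a backward arc only, or symmetric. For a string $Y$, $Y^R$ is the concatenation of $R$ copies of $Y$, and juxtaposition denotes concatenation. A string $Y$ is primitive if it is not $Z^r$ for any shorter string $Z$ and integer $r\ge2$. The shift $\sigma^i(y_1\dots y_s)=y_{i+1}\dots y_sy_1\dots y_i$, and subscripts of $y$ are taken mod $s$ in $\{1,\dots,s\}$. For strings $Y=z_1\dots z_p$ and $X=x_1\dots x_q$, $Y\leq^* X$ means there is a strictly increasing $\alpha:\{1,\dots,p\}\to\{1,\dots,q\}$ with $z_j\in\{x_{\alpha(j)},*\}$ for each $j$. Time and space refer to a standard (log-space/RAM) model of computation with the input read-only. *)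

(* Defs.v *)
From mathcomp Require Import all_boot.
Set Implicit Arguments. Unset Strict Implicit. Unset Printing Implicit Defensive.

Inductive sym := Plus | Minus | Star.

Definition spow (Y : seq sym) (R : nat) : seq sym := flatten (nseq R Y).

(* sigma^i(Y) = y_{i+1} ... y_s y_1 ... y_i  (mathcomp's rot) *)
Definition shift (i : nat) (Y : seq sym) : seq sym := rot i Y.

Definition primitive (Y : seq sym) : Prop :=
  forall (Z : seq sym) (r : nat), 2 <= r -> size Z < size Y -> Y <> spow Z r.

Definition leq_star (Y X : seq sym) : Prop :=
  exists alpha : nat -> nat,
    (forall j, j.+1 < size Y -> alpha j < alpha j.+1) /\
    (forall j, j < size Y ->
       alpha j < size X /\
       (nth Star Y j = nth Star X (alpha j) \/ nth Star Y j = Star)).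

(* ---------- A unit-cost RAM with read-only input ----------
   Input: the orientation string C (read-only, random access) and a
   read-only natural parameter p (only compared, never loaded).
   Registers hold naturals; space = total bit length of the registers
   used by the program; output is write-only and not counted. *)
Inductive instr :=
| IConst (d n : nat)
| IAdd (d a b : nat)
| ISub (d a b : nat)          (* r_d := r_a - r_b (truncated) *)
| IRead (d a : nat)           (* r_d := code of C[r_a] (0 if out of range) *)
| ILen (d : nat)
| IJmp (l : nat)
| IJlt (a b l : nat)
| IJltP (a l : nat)
| IJgtP (a l : nat)
| IOut (a : nat)
| IHalt.

Definition sym_code (x : sym) : nat :=
  match x with Plus => 1 | Minus => 2 | Star => 3 end.

Definition read_code (C : seq sym) (k : nat) : nat :=
  if k < size C then sym_code (nth Star C k) else 0.

Record config := Config { pc : nat; regs : nat -> nat; outp : seq nat }.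

Definition upd (f : nat -> nat) (d v : nat) : nat -> nat :=
  fun r => if r == d then v else f r.

Definition step (P : seq instr) (C : seq sym) (p : nat) (c : config)
  : option config :=
  let f := regs c in
  let nx := (pc c).+1 in
  match nth IHalt P (pc c) with
  | IConst d n => Some (Config nx (upd f d n) (outp c))
  | IAdd d a b => Some (Config nx (upd f d (f a + f b)) (outp c))
  | ISub d a b => Some (Config nx (upd f d (f a - f b)) (outp c))
  | IRead d a => Some (Config nx (upd f d (read_code C (f a))) (outp c))
  | ILen d => Some (Config nx (upd f d (size C)) (outp c))
  | IJmp l => Some (Config l f (outp c))
  | IJlt a b l => Some (Config (if f a < f b then l else nx) f (outp c))
  | IJltP a l => Some (Config (if f a < p then l else nx) f (outp c))
  | IJgtP a l => Some (Config (if p < f a then l else nx) f (outp c))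
  | IOut a => Some (Config nx f (rcons (outp c) (f a)))
  | IHalt => None
  end.

Fixpoint steps (P : seq instr) (C : seq sym) (p : nat) (t : nat) (c : config)
  : option config :=
  match t with
  | 0 => Some c
  | t'.+1 => obind (step P C p) (steps P C p t' c)
  end.

Definition init_config : config := Config 0 (fun _ => 0) [::].

Definition instr_maxreg (i : instr) : nat :=
  match i with
  | IConst d _ | IRead d _ | ILen d => d
  | IAdd d a b | ISub d a b => maxn d (maxn a b)
  | IJlt a b _ => maxn a b
  | IJltP a _ | IJgtP a _ | IOut a => a
  | IJmp _ | IHalt => 0
  end.

Definition nregs (P : seq instr) : nat := (\max_(i <- P) instr_maxreg i).+1.

(* bit length of a natural number (at least 1) *)
Definition bitlen (n : nat) : nat := (trunc_log 2 n).+1.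

Definition space (P : seq instr) (c : config) : nat :=
  \sum_(r < nregs P) bitlen (regs c r).

Definition runs_within (P : seq instr) (C : seq sym) (p T Sp : nat)
  (res : seq nat) : Prop :=
  exists t cf,
    [/\ t <= T, steps P C p t init_config = Some cf,
        step P C p cf = None, outp cf = res &
        forall t' cf', t' <= t -> steps P C p t' init_config = Some cf' ->
          space P cf' <= Sp].

(* Main.v *)
Require Import Defs.
From mathcomp Require Import all_boot zify.
Set Implicit Arguments. Unset Strict Implicit. Unset Printing Implicit Defensive.


Definition matchb (d x : sym) : bool :=
  match d, x with Star, _ => true | Plus, Plus => true | Minus, Minus => true
  | _, _ => false end.

Lemma matchbP d x : matchb d x <-> (d = x \/ d = Star).
Proof. by case: d; case: x => /=; split=> //; intuition congruence. Qed.

Fixpoint gmatch (Y X : seq sym) {struct X} : bool :=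
  match Y, X with
  | [::], _ => true
  | _ :: _, [::] => false
  | y :: Y', x :: X' => if matchb y x then gmatch Y' X' else gmatch Y X'
  end.

Lemma gmatch_leq Y X : gmatch Y X -> leq_star Y X.
Proof.
elim: X Y => [|x X IH] [|y Y] //=.
- move=> _; exists id; split=> // j; by rewrite ltn0.
- move=> _; exists id; split=> // j; by rewrite ltn0.
case E: (matchb y x) => H.
- have [a [Ha1 Ha2]] := IH _ H.
  exists (fun j => if j is j'.+1 then (a j').+1 else 0); split.
  + case=> [|j] /= Hj; first by [].
    by rewrite ltnS; apply: Ha1.
  + case=> [|j] /= Hj; first by split=> //; apply/matchbP; rewrite E.
    have [h1 h2] := Ha2 j Hj. by split.
- have [a [Ha1 Ha2]] := IH _ H.
  exists (fun j => (a j).+1); split.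
  + move=> j Hj /=. rewrite ltnS. exact: Ha1.
  + move=> j Hj /=. have [h1 h2] := Ha2 j Hj. by split.
Qed.

Lemma ls_mono (Y : seq sym) (a : nat -> nat) : (forall j, j.+1 < size Y -> a j < a j.+1) ->
  forall j, j < size Y -> a 0 + j <= a j.
Proof.
move=> H; elim=> [|j IH] Hj; first by rewrite addn0.
have := H j Hj. have := IH (ltnW Hj). lia.
Qed.

Lemma ls_shift Y x X (a : nat -> nat) :
  (forall j, j.+1 < size Y -> a j < a j.+1) ->
  (forall j, j < size Y -> a j < size (x :: X) /\
       (nth Star Y j = nth Star (x :: X) (a j) \/ nth Star Y j = Star)) ->
  (forall j, j < size Y -> 0 < a j) -> leq_star Y X.
Proof.
move=> H1 H2 H3; exists (fun j => (a j).-1); split.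
- move=> j Hj. have := H1 j Hj. have := H3 j (ltnW Hj). lia.
- move=> j Hj. have [h1 h2] := H2 j Hj. have h3 := H3 j Hj.
  move: h1 h2. case E: (a j) => [|k]; first by rewrite E in h3.
  by [].
Qed.

Lemma leq_gmatch Y X : leq_star Y X -> gmatch Y X.
Proof.
elim: X Y => [|x X IH] [|y Y] //=.
- move=> [a [_ H]]. by have [] := H 0 erefl.
move=> [a [Ha1 Ha2]].
have Hm := ls_mono Ha1.
case E: (matchb y x).
- apply: IH. apply: (@ls_shift Y x X (fun j => a j.+1)).
  + move=> j Hj. exact: Ha1.
  + move=> j Hj. exact: Ha2.
  + move=> j Hj. have := Hm j.+1 Hj. lia.
- apply: IH. apply: (@ls_shift (y :: Y) x X a) => //.
  move=> j Hj. have := Hm j Hj.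
  case E0: (a 0) => [|k]; last by lia.
  have [_ h] := Ha2 0 erefl. rewrite /= E0 /= in h.
  have : matchb y x by apply/matchbP. by rewrite E.
Qed.

Lemma leq_starE Y X : leq_star Y X <-> gmatch Y X.
Proof. split; [exact: leq_gmatch | exact: gmatch_leq]. Qed.

Fixpoint pref (f : nat -> sym) (k n : nat) : seq sym :=
  if n is n'.+1 then f k :: pref f k.+1 n' else [::].

Fixpoint gcount (f : nat -> sym) (k : nat) (X : seq sym) : nat :=
  if X is x :: X' then
    (if matchb (f k) x then (gcount f k.+1 X').+1 else gcount f k X')
  else 0.

Lemma gmatch_pref f X : forall k n, gmatch (pref f k n) X = (n <= gcount f k X).
Proof.
elim: X => [|x X IH] k [|n] //=.
case: (matchb (f k) x); first by rewrite IH.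
by rewrite -/(pref f k n.+1) IH.
Qed.

Lemma size_pref f k n : size (pref f k n) = n.
Proof. by elim: n k => [|n IH] k //=; rewrite IH. Qed.

Lemma nth_pref f k n t : t < n -> nth Star (pref f k n) t = f (k + t).
Proof.
elim: n k t => [|n IH] k [|t] //= Ht; first by rewrite addn0.
by rewrite IH // addSnnS.
Qed.

Lemma size_spow W R : size (spow W R) = R * size W.
Proof. by rewrite /spow size_flatten /shape map_nseq sumn_nseq mulnC. Qed.

Lemma nth_spow W R t : 0 < size W -> t < R * size W ->
  nth Star (spow W R) t = nth Star W (t %% size W).
Proof.
move=> sW; elim: R t => [|R IH] t //= Ht.
rewrite /spow /= -/(spow W R) nth_cat.
case: ltnP => Hs; first by rewrite modn_small.
rewrite IH; last by move: Ht; rewrite mulSn; lia.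
by rewrite -{2}(subnK Hs) modnDr.
Qed.

Definition perf (W : seq sym) (t : nat) := nth Star W (t %% size W).

Lemma spow_pref W R : 0 < size W -> spow W R = pref (perf W) 0 (R * size W).
Proof.
move=> sW; apply: (@eq_from_nth _ Star); first by rewrite size_spow size_pref.
move=> t; rewrite size_spow => Ht. by rewrite nth_spow // nth_pref.
Qed.

Lemma pref_rcons f k n : pref f k n.+1 = rcons (pref f k n) (f (k + n)).
Proof.
elim: n k => [|n IH] k; first by rewrite /= addn0.
change (pref f k n.+2) with (f k :: pref f k.+1 n.+1).
by rewrite IH addSnnS.
Qed.

Lemma nth_rot0 (D : seq sym) i : i < size D -> nth Star (rot i D) 0 = nth Star D i.
Proof.
move=> Hi; rewrite /rot nth_cat size_drop subn_gt0 Hi nth_drop addn0 //.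
Qed.

Lemma spow_last D i r : i < size D ->
  spow (rot i D) r ++ [:: nth Star D i] =
  pref (perf (rot i D)) 0 (r * size D).+1.
Proof.
move=> Hi. have sD : 0 < size D by lia.
rewrite pref_rcons -cats1 -(size_rot i D) -spow_pref ?size_rot //.
by rewrite /perf size_rot add0n modnMl nth_rot0.
Qed.


Lemma steps_add P C p a b c :
  steps P C p (a + b) c = obind (steps P C p b) (steps P C p a c).
Proof.
elim: b => [|b IH] /=; first by rewrite addn0; case: (steps _ _ _ a c).
rewrite addnS /= IH; by case: (steps P C p a c).
Qed.

Section Mach.
Variable D : seq sym.
Variable nseg : nat.
Variable post : nat -> nat -> instr.
Variable fin : nat -> instr.

Definition SL := 9 * size D + 9.
Definition segstart i := 3 + i * SL.
Definition bstart i j := segstart i + 3 + j * 9.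
Definition exitpc i := bstart i (size D).

Definition blockcode (i j o : nat) : instr :=
  let d := nth Star (rot i D) j in
  let b := bstart i j in
  match o with
  | 0 => IJlt 2 1 (b + 2)
  | 1 => IJmp (exitpc i)
  | 2 => IRead 5 2
  | 3 => IAdd 2 2 6
  | 4 => match d with Star => IJmp (b + 6) | Plus => IJlt 5 6 b | Minus => IJlt 5 7 b end
  | 5 => match d with Star => IJmp (b + 6) | Plus => IJlt 6 5 b | Minus => IJlt 7 5 b end
  | 6 => if j.+1 < size D then IAdd 4 4 6 else IConst 4 0
  | 7 => if j.+1 < size D then IJmp (bstart i j.+1) else IAdd 3 3 6
  | _ => IJmp (bstart i 0)
  end.

Definition segcode i o :=
  if o < 3 then (match o with 0 => IConst 2 0 | 1 => IConst 3 0 | _ => IConst 4 0 end)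
  else if o < 3 + size D * 9 then blockcode i ((o - 3) %/ 9) ((o - 3) %% 9)
  else post i (o - (3 + size D * 9)).

Definition prog pc :=
  if pc < 3 then (match pc with 0 => ILen 1 | 1 => IConst 6 1 | _ => IConst 7 2 end)
  else if pc - 3 < nseg * SL then segcode ((pc - 3) %/ SL) ((pc - 3) %% SL)
  else fin (pc - 3 - nseg * SL).

Definition Plen := 3 + nseg * SL + 2.
Definition P := mkseq prog Plen.

Arguments SL : simpl never.
Arguments segstart : simpl never.
Arguments bstart : simpl never.
Arguments exitpc : simpl never.
Arguments P : simpl never.

Lemma ltF a b : b <= a -> (a < b) = false.
Proof. by rewrite ltnNge => ->. Qed.

Lemma SL_gt0 : 0 < SL. Proof. rewrite /SL; lia. Qed.

Lemma fetch_seg i x pc : i < nseg -> x < SL -> pc = 3 + i * SL + x ->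
  nth IHalt P pc = segcode i x.
Proof.
move=> Hi Hx ->.
have H1 : i.+1 * SL <= nseg * SL by rewrite leq_mul2r Hi orbT.
rewrite /P nth_mkseq; last by rewrite /Plen; lia.
rewrite /prog; have -> : (3 + i * SL + x < 3) = false by apply/negbTE; rewrite -leqNgt leq_addr.
have -> : 3 + i * SL + x - 3 = i * SL + x by lia.
rewrite (_ : i * SL + x < nseg * SL); last lia.
by rewrite divnMDl ?SL_gt0 // divn_small // addn0 modnMDl modn_small.
Qed.

Lemma fetchB i j o pc : i < nseg -> j < size D -> o < 9 -> pc = bstart i j + o ->
  nth IHalt P pc = blockcode i j o.
Proof.
move=> Hi Hj Ho ->.
rewrite (@fetch_seg i (3 + j * 9 + o)) //; last by rewrite /bstart /segstart; lia.
  rewrite /segcode (@ltF (3 + j * 9 + o) 3); last lia.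
  rewrite (_ : 3 + j * 9 + o < 3 + size D * 9); last lia.
  have -> : 3 + j * 9 + o - 3 = j * 9 + o by lia.
  by rewrite divnMDl // divn_small // addn0 modnMDl modn_small.
rewrite /SL; lia.
Qed.

Lemma fetchI i o pc : i < nseg -> o < 3 -> pc = segstart i + o ->
  nth IHalt P pc = match o with 0 => IConst 2 0 | 1 => IConst 3 0 | _ => IConst 4 0 end.
Proof.
move=> Hi Ho ->.
rewrite (@fetch_seg i o); [by rewrite /segcode Ho | by [] | rewrite /SL; lia | rewrite /segstart; lia].
Qed.

Lemma fetchPost i o pc : i < nseg -> o < 6 -> pc = exitpc i + o ->
  nth IHalt P pc = post i o.
Proof.
move=> Hi Ho ->.
rewrite (@fetch_seg i (3 + size D * 9 + o)) //; last by rewrite /exitpc /bstart /segstart; lia.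
  rewrite /segcode (@ltF (3 + size D * 9 + o) 3); last lia.
  rewrite (@ltF (3 + size D * 9 + o) (3 + size D * 9)); last lia.
  congr post; lia.
rewrite /SL; lia.
Qed.

Lemma fetchPre pc : pc < 3 ->
  nth IHalt P pc = match pc with 0 => ILen 1 | 1 => IConst 6 1 | _ => IConst 7 2 end.
Proof.
move=> Hp. rewrite /P nth_mkseq; last by rewrite /Plen; lia.
by rewrite /prog Hp.
Qed.

Lemma fetchFin o pc : o < 2 -> pc = segstart nseg + o -> nth IHalt P pc = fin o.
Proof.
move=> Ho ->. rewrite /P nth_mkseq; last by rewrite /Plen /segstart; lia.
rewrite /prog /segstart (@ltF (3 + nseg * SL + o) 3); last lia.
rewrite (@ltF (3 + nseg * SL + o - 3) (nseg * SL)); last lia.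
congr fin; lia.
Qed.

Lemma fetchOut pc : Plen <= pc -> nth IHalt P pc = IHalt.
Proof. move=> H; rewrite nth_default // size_mkseq //. Qed.

Variable C : seq sym.
Variable p : nat.

Definition Bd := size C + size D + 3.
Definition okr (f : nat -> nat) := forall r, f r <= Bd.
Definition okc (c : config) := okr (regs c).

Definition reach c n c' := exists k, k <= n /\ steps P C p k c = Some c' /\
  forall k' c'', k' <= k -> steps P C p k' c = Some c'' -> okc c''.

Definition reachQ c n (Q : config -> Prop) := exists c', reach c n c' /\ Q c'.

Lemma updK f d v r : upd f d v r = if r == d then v else f r.
Proof. by []. Qed.

Lemma okr_upd f d v : okr f -> v <= Bd -> okr (upd f d v).
Proof. move=> H Hv r; rewrite /upd; case: (r == d) => //. Qed.

Lemma reachQ0 c n (Q : config -> Prop) : okc c -> Q c -> reachQ c n Q.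
Proof.
move=> Hc HQ; exists c; split=> //; exists 0; split=> //; split=> //.
move=> k' c''; rewrite leqn0 => /eqP -> [<-] //.
Qed.

Lemma reachQ_mono c n n' Q : n <= n' -> reachQ c n Q -> reachQ c n' Q.
Proof.
move=> Hn [c' [[k [Hk [Hs Ho]]] HQ]]; exists c'; split=> //.
exists k; split=> //; exact: leq_trans Hn.
Qed.

Lemma stepQ c c1 n Q : step P C p c = Some c1 -> okc c -> okc c1 ->
  reachQ c1 n Q -> reachQ c n.+1 Q.
Proof.
move=> Hs Hc Hc1 [c' [[k [Hk [Hs' Ho]]] HQ]]; exists c'; split=> //.
exists (1 + k); split; first by rewrite add1n.
split; first by rewrite steps_add /= Hs.
move=> k' c''; case: k' => [|k'] Hk'; first by move=> [<-].
rewrite -add1n steps_add /= Hs /= => H. apply: (Ho k') => //; lia.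
Qed.

Lemma reachQ_trans c n1 n2 Q1 Q :
  reachQ c n1 Q1 -> (forall c1, okc c1 -> Q1 c1 -> reachQ c1 n2 Q) -> reachQ c (n1 + n2) Q.
Proof.
move=> [c1 [[k1 [Hk1 [Hs1 Ho1]]] HQ1]] H2.
have [c2 [[k2 [Hk2 [Hs2 Ho2]]] HQ2]] := H2 c1 (Ho1 k1 c1 (leqnn _) Hs1) HQ1.
exists c2; split=> //; exists (k1 + k2); split; first by lia.
split; first by rewrite steps_add Hs1.
move=> k' c''; case: (leqP k' k1) => Hk'.
  by move=> _; apply: Ho1.
rewrite -(subnKC (ltnW Hk')) steps_add Hs1 /= => H.
apply: (Ho2 (k' - k1)) => //; lia.
Qed.


Ltac okt := rewrite /okc /=; repeat (apply: okr_upd); rewrite ?/Bd; try assumption; try lia.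
Ltac stB i j o t := eapply stepQ; [ match goal with |- step _ _ _ {| pc := ?q |} = _ =>
   let H := fresh "Hf" in
   assert (H : nth IHalt P q = blockcode i j o) by (apply: fetchB => //; rewrite /bstart; lia);
   rewrite /step H /=; clear H; t; reflexivity end | okt | okt | ].

Lemma mtest i j x g o N Q pc0 : pc0 = bstart i j + 4 -> i < nseg -> j < size D -> okr g ->
  g 5 = sym_code x -> g 6 = 1 -> g 7 = 2 ->
  (matchb (nth Star (rot i D) j) x -> reachQ (Config (bstart i j + 6) g o) N Q) ->
  (~~ matchb (nth Star (rot i D) j) x -> reachQ (Config (bstart i j) g o) N Q) ->
  reachQ (Config pc0 g o) N.+2 Q.
Proof.
move=> -> Hi Hj Hg H5 H6 H7 Hm Hn.
case E: (nth Star (rot i D) j) Hm Hn => Hm Hn; case: x H5 Hm Hn => H5 Hm Hn.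
all: stB i j 4 ltac:(rewrite ?E ?H5 ?H6 ?H7 /=).
all: try by apply: (reachQ_mono (leqnSn N)); apply: Hm.
all: try by apply: (reachQ_mono (leqnSn N)); apply: Hn.
all: stB i j 5 ltac:(rewrite ?E ?H5 ?H6 ?H7 /=).
all: first [by apply: Hn | by rewrite -!addnS; apply: Hm].
Qed.

Lemma adv i j g o N Q pc0 : pc0 = bstart i j + 6 -> i < nseg -> j < size D -> okr g -> g 6 = 1 ->
  (j.+1 < size D -> g 4 + 1 <= Bd) -> (j.+1 = size D -> g 3 + 1 <= Bd) ->
  (j.+1 < size D -> reachQ (Config (bstart i j.+1) (upd g 4 (g 4 + 1)) o) N Q) ->
  (j.+1 = size D -> reachQ (Config (bstart i 0) (upd (upd g 4 0) 3 (g 3 + 1)) o) N Q) ->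
  reachQ (Config pc0 g o) N.+3 Q.
Proof.
move=> -> Hi Hj Hg H6 B1 B2 K1 K2.
case: (ltnP j.+1 (size D)) => Hlt.
- have b1 := B1 Hlt.
  stB i j 6 ltac:(rewrite ?Hlt ?H6 /=).
  stB i j 7 ltac:(rewrite ?Hlt /=).
  apply: (reachQ_mono (leqnSn N)); exact: K1.
- have e : j.+1 = size D by lia.
  have b2 := B2 e.
  have Hlt' : j.+1 < size D = false by rewrite e ltnn.
  stB i j 6 ltac:(rewrite ?Hlt' /=).
  stB i j 7 ltac:(rewrite ?Hlt' ?updK /= ?H6).
  stB i j 8 ltac:(idtac).
  exact: K2.
Qed.

Lemma reachQ_weaken c n (Q1 Q2 : config -> Prop) :
  (forall c', Q1 c' -> Q2 c') -> reachQ c n Q1 -> reachQ c n Q2.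
Proof. move=> H [c' [H1 H2]]; exists c'; split=> //; exact: H. Qed.

Lemma readE pos : pos < size C -> read_code C pos = sym_code (nth Star C pos).
Proof. by rewrite /read_code => ->. Qed.

Lemma perfE i q j : j < size D ->
  perf (rot i D) (q * size D + j) = nth Star (rot i D) j.
Proof. by move=> Hj; rewrite /perf size_rot modnMDl modn_small. Qed.

Definition scanQ i o q j pos (f : nat -> nat) : config -> Prop := fun c' =>
  [/\ pc c' = exitpc i, outp c' = o,
      regs c' 3 * size D + regs c' 4 =
        q * size D + j + gcount (perf (rot i D)) (q * size D + j) (drop pos C),
      regs c' 4 < size D &
      forall r, r != 2 -> r != 3 -> r != 4 -> r != 5 -> regs c' r = f r].

Lemma scan_exit i pos q j f o : i < nseg ->
  okr f -> f 1 = size C -> f 2 = pos -> f 3 = q -> f 4 = j ->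
  j < size D -> pos = size C ->
  reachQ (Config (bstart i j) f o) (9 * (size C - pos) + 2) (scanQ i o q j pos f).
Proof.
move=> Hi Hf H1 H2 H3 H4 Hj e; rewrite e subnn /=.
have H2' : f 2 = size C by rewrite H2 e.
stB i j 0 ltac:(rewrite ?H1 ?H2' ?ltnn /=).
stB i j 1 ltac:(idtac).
apply: reachQ0 => //; split=> //=.
by rewrite H3 H4 drop_size /= addn0.
by rewrite H4.
Qed.

Lemma scan i : i < nseg -> 0 < size D -> forall n pos q j f o,
  size C - pos <= n -> okr f -> f 1 = size C -> f 6 = 1 -> f 7 = 2 ->
  f 2 = pos -> f 3 = q -> f 4 = j ->
  j < size D -> pos <= size C -> q * size D + j <= pos ->
  reachQ (Config (bstart i j) f o) (9 * (size C - pos) + 2) (scanQ i o q j pos f).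
Proof.
move=> Hi sD; elim=> [|n IH] pos q j f o Hn Hf H1 H6 H7 H2 H3 H4 Hj Hp Hq.
  by apply: scan_exit => //; lia.
case: (ltnP pos (size C)) => Hlt; last by apply: scan_exit => //; lia.
have Hdrop : drop pos C = nth Star C pos :: drop pos.+1 C by rewrite (drop_nth Star Hlt).
have hx : sym_code (nth Star C pos) <= 3 by case: (nth Star C pos).
set N' := 9 * (size C - pos.+1) + 2.
apply: (reachQ_mono (n := ((3 + N').+2).+3)); first by rewrite /N'; lia.
stB i j 0 ltac:(rewrite ?H1 ?H2 ?Hlt /=).
stB i j 2 ltac:(rewrite ?H2 ?(readE Hlt)).
stB i j 3 ltac:(rewrite ?updK /= ?H2 ?H6).
set g2 := upd (upd f 5 (sym_code (nth Star C pos))) 2 (pos + 1).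
have Hg2 : okr g2 by apply: okr_upd; [apply: okr_upd => //; rewrite /Bd; lia | rewrite /Bd; lia].
apply: (@mtest i j (nth Star C pos)) => //; first lia.
- move=> Hm.
  apply: adv => //.
  + move=> Hlt2; rewrite /g2 !updK /= H4 /Bd; lia.
  + move=> e; rewrite /g2 !updK /= H3 /Bd; nia.
  + move=> Hlt2.
    apply: (@reachQ_weaken _ _ (scanQ i o q j.+1 pos.+1 (upd g2 4 (g2 4 + 1)))).
    * move=> c' [Hpc Ho Hcnt Hj' Hfr]; split => //.
      -- rewrite Hcnt Hdrop /= perfE // Hm.
         rewrite (_ : q * size D + j.+1 = (q * size D + j).+1); last by rewrite addnS.
         lia.
      -- move=> r a b c d; by rewrite Hfr // /g2 !updK ?(negbTE a) ?(negbTE b) ?(negbTE c) ?(negbTE d).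
    * rewrite /N'; apply: IH; rewrite /g2 ?updK /= ?H1 ?H2 ?H3 ?H4 ?H6 ?H7; try lia.
      apply: okr_upd => //; rewrite ?updK /= ?H4 /Bd; lia.
  + move=> e.
    apply: (@reachQ_weaken _ _ (scanQ i o q.+1 0 pos.+1 (upd (upd g2 4 0) 3 (g2 3 + 1)))).
    * move=> c' [Hpc Ho Hcnt Hj' Hfr]; split => //.
      -- rewrite Hcnt Hdrop /= perfE // Hm.
         rewrite (_ : q.+1 * size D + 0 = (q * size D + j).+1); last by rewrite mulSn; lia.
         lia.
      -- move=> r a b c d; by rewrite Hfr // /g2 !updK ?(negbTE a) ?(negbTE b) ?(negbTE c) ?(negbTE d).
    * rewrite /N'; apply: IH; rewrite /g2 ?updK /= ?H1 ?H2 ?H3 ?H4 ?H6 ?H7; try lia.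
      -- apply: okr_upd; first apply: okr_upd => //.
         rewrite ?updK /= ?H3 /Bd; nia.
- move=> Hnm.
  apply: (reachQ_mono (n := N')); first lia.
  apply: (@reachQ_weaken _ _ (scanQ i o q j pos.+1 g2)).
  + move=> c' [Hpc Ho Hcnt Hj' Hfr]; split => //.
    * by rewrite Hcnt Hdrop /= perfE // (negbTE Hnm).
    * move=> r a b c d; by rewrite Hfr // /g2 !updK ?(negbTE a) ?(negbTE b) ?(negbTE c) ?(negbTE d).
  + rewrite /N'; apply: IH; rewrite /g2 ?updK /= ?H1 ?H2 ?H3 ?H4 ?H6 ?H7; try lia.
  exact: Hg2.
Qed.


Lemma reachQ_pc pc1 pc2 f o n Q : pc1 = pc2 ->
  reachQ (Config pc2 f o) n Q -> reachQ (Config pc1 f o) n Q.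
Proof. by move=> ->. Qed.

Ltac stI i o t := eapply stepQ; [ match goal with |- step _ _ _ {| pc := ?q |} = _ =>
   let H := fresh "Hf" in
   assert (H : nth IHalt P q = match o with 0 => IConst 2 0 | 1 => IConst 3 0 | _ => IConst 4 0 end)
     by (apply: (@fetchI i o) => //; lia);
   rewrite /step H /=; clear H; t; reflexivity end | okt | okt | ].

Definition segQ i o (f : nat -> nat) : config -> Prop := fun c' =>
  [/\ pc c' = exitpc i, outp c' = o,
      regs c' 3 * size D + regs c' 4 = gcount (perf (rot i D)) 0 C,
      regs c' 4 < size D &
      forall r, r != 2 -> r != 3 -> r != 4 -> r != 5 -> regs c' r = f r].

Lemma segment i f o : i < nseg -> 0 < size D -> okr f ->
  f 1 = size C -> f 6 = 1 -> f 7 = 2 ->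
  reachQ (Config (segstart i) f o) (9 * size C + 5) (segQ i o f).
Proof.
move=> Hi sD Hf H1 H6 H7.
have e : 9 * size C + 5 = (9 * (size C - 0) + 2).+3 by lia.
rewrite e.
stI i 0 ltac:(idtac).
stI i 1 ltac:(idtac).
stI i 2 ltac:(idtac).
apply: (reachQ_pc (pc2 := bstart i 0)); first by rewrite /bstart; lia.
apply: reachQ_weaken; last first.
  apply: (@scan i Hi sD (size C) 0 0 0) => //; rewrite ?updK /=; try lia.
  by repeat apply: okr_upd.
move=> c' [Hpc Ho Hcnt Hj' Hfr]; split => //.
  by rewrite Hcnt mul0n drop0.
move=> r a b c d; rewrite Hfr //.
by rewrite !updK ?(negbTE a) ?(negbTE b) ?(negbTE c) ?(negbTE d).
Qed.


Lemma space_ok c : okc c -> space P c <= nregs P * bitlen Bd.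
Proof.
move=> Hc; rewrite /space.
have H : \sum_(r < nregs P) bitlen (regs c r) <= \sum_(r < nregs P) bitlen Bd.
  by apply: leq_sum => r _; rewrite /bitlen ltnS; apply: leq_trunc_log; apply: Hc.
apply: leq_trans H _; by rewrite sum_nat_const card_ord.
Qed.

Lemma reach_runs T res Sp :
  reachQ init_config T (fun c => step P C p c = None /\ outp c = res) ->
  nregs P * bitlen Bd <= Sp -> runs_within P C p T Sp res.
Proof.
move=> [cf [[k [Hk [Hs Ho]]] [Hn Hout]]] HS.
exists k, cf; split => //.
move=> t' cf' Ht' Hs'. apply: leq_trans HS. apply: space_ok. exact: Ho t' cf' Ht' Hs'.
Qed.

Lemma prelude n Q : 0 < nseg ->
  (forall f, okr f -> f 0 = 0 -> f 1 = size C -> f 6 = 1 -> f 7 = 2 ->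
     (forall r, 7 < r -> f r = 0) -> reachQ (Config (segstart 0) f [::]) n Q) ->
  reachQ init_config n.+3 Q.
Proof.
move=> Hn H.
have ok0 : okc init_config by move=> r.
eapply stepQ.
  by rewrite /step /=.
  done.
  by apply: okr_upd => //; rewrite /Bd; lia.
eapply stepQ.
  by rewrite /step /=.
  by apply: okr_upd => //; rewrite /Bd; lia.
  by repeat apply: okr_upd => //; rewrite /Bd; lia.
eapply stepQ.
  by rewrite /step /=.
  by repeat apply: okr_upd => //; rewrite /Bd; lia.
  by repeat apply: okr_upd => //; rewrite /Bd; lia.
apply: (reachQ_pc (pc2 := segstart 0)); first by rewrite /segstart mul0n.
apply: H => //.
  by repeat apply: okr_upd => //; rewrite /Bd; lia.
move=> r Hr; rewrite !updK.
have -> : (r == 7) = false by apply/eqP; lia.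
have -> : (r == 6) = false by apply/eqP; lia.
by have -> : (r == 1) = false by apply/eqP; lia.
Qed.

End Mach.

Lemma bitlen_le n k : 0 < k -> n < 2 ^ k -> bitlen n <= k.
Proof.
move=> Hk Hn; rewrite /bitlen.
case: n Hn => [|n] Hn; first by rewrite trunc_log0.
have := @trunc_logP 2 n.+1 erefl erefl => H.
have : 2 ^ trunc_log 2 n.+1 < 2 ^ k by apply: leq_ltn_trans H Hn.
by rewrite ltn_exp2l.
Qed.

Lemma bitlen_add a b : bitlen (a + b) <= bitlen a + bitlen b.
Proof.
apply: bitlen_le; first by rewrite /bitlen; lia.
have Ha : a < 2 ^ bitlen a by apply: trunc_log_ltn.
have Hb : b < 2 ^ bitlen b by apply: trunc_log_ltn.
have Ha2 : 2 <= 2 ^ bitlen a by rewrite /bitlen expnS; have := expn_gt0 2 (trunc_log 2 a); lia.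
have Hb2 : 2 <= 2 ^ bitlen b by rewrite /bitlen expnS; have := expn_gt0 2 (trunc_log 2 b); lia.
rewrite expnD. nia.
Qed.

Lemma bitlen_gt0 n : 0 < bitlen n. Proof. by []. Qed.

Lemma bitlen_Bd m K : bitlen (m + K) <= (bitlen K).+1 * bitlen m.
Proof.
apply: leq_trans (bitlen_add m K) _.
have := bitlen_gt0 m. nia.
Qed.


Ltac okt := rewrite /okc /=; repeat (apply: okr_upd); rewrite ?/Bd; try assumption; try lia.
Ltac stX rhs prf t := eapply stepQ; [ match goal with |- step ?PP _ _ {| pc := ?q |} = _ =>
   let H := fresh "Hf" in assert (H : nth IHalt PP q = rhs) by prf;
   rewrite /step H /=; clear H; t; reflexivity end | okt | okt | ].

Lemma halt_step PP C p q f o : nth IHalt PP q = IHalt -> step PP C p (Config q f o) = None.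
Proof. by move=> H; rewrite /step /= H. Qed.

Lemma divE Q J s : J < s -> (Q * s + J) %/ s = Q.
Proof. move=> H; rewrite divnMDl ?divn_small ?addn0 //; lia. Qed.

Definition post1 D (i o : nat) := IJmp (segstart D 1).
Definition fin1 (o : nat) := if o is 0 then IOut 3 else IHalt.
Definition P1 D := P D 1 (post1 D) fin1.

Lemma part1_run D C : 0 < size D ->
  runs_within (P1 D) C 0 (9 * size C + 10) (nregs (P1 D) * bitlen (Bd D C))
    [:: gcount (perf D) 0 C %/ size D].
Proof.
move=> sD.
apply: reach_runs => //.
have -> : 9 * size C + 10 = (9 * size C + 5 + 2).+3 by lia.
apply: prelude => // f Hf H0 H1 H6 H7 Hr.
apply: reachQ_trans.
  by apply: (@segment D 1 (post1 D) fin1 C 0 0 f [::]).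
move=> [pc1 f1 o1] Hok [/= Hpc Ho Hcnt Hj Hfr]; subst.
stX (IJmp (segstart D 1)) ltac:(apply: (@fetchPost D 1 (post1 D) fin1 0 0) => //; lia) idtac.
stX (IOut 3) ltac:(apply: (@fetchFin D 1 (post1 D) fin1 0) => //; lia) idtac.
apply: reachQ0 => //; split.
  apply: halt_step. apply: (@fetchFin D 1 (post1 D) fin1 1) => //; lia.
by rewrite /= -(rot0 D) -Hcnt size_rot divE.
Qed.

Lemma runs_mono PP C p T T' Sp Sp' res : T <= T' -> Sp <= Sp' ->
  runs_within PP C p T Sp res -> runs_within PP C p T' Sp' res.
Proof.
move=> HT HS [t [cf [H1 H2 H3 H4 H5]]]; exists t, cf; split => //.
  exact: leq_trans HT.
move=> t' cf' Ht Hs; apply: leq_trans HS; exact: H5 Hs.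
Qed.

Lemma spow_char W R C : 0 < size W ->
  leq_star (spow W R) C <-> R <= gcount (perf W) 0 C %/ size W.
Proof. by move=> sW; rewrite leq_starE spow_pref // gmatch_pref leq_divRL. Qed.

Lemma space_bound n D C c : n * (bitlen (size D + 3)).+1 <= c ->
  n * bitlen (Bd D C) <= c * bitlen (size C).
Proof.
move=> Hc; rewrite /Bd -addnA.
apply: leq_trans (leq_mul (leqnn n) (bitlen_Bd (size C) (size D + 3))) _.
rewrite mulnA; exact: leq_mul Hc (leqnn _).
Qed.

Lemma part1 D : 0 < size D ->
  exists (P : seq instr) (c : nat),
     forall C : seq sym,
       exists R : nat,
         [/\ runs_within P C 0 (c * (size C).+1) (c * bitlen (size C)) [:: R],
             leq_star (spow D R) C &
             forall R', leq_star (spow D R') C -> R' <= R].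
Proof.
move=> sD.
exists (P1 D), (10 + nregs (P1 D) * (bitlen (size D + 3)).+1) => C.
exists (gcount (perf D) 0 C %/ size D); split.
- apply: runs_mono (part1_run C sD).
    nia.
  apply: space_bound; lia.
- by rewrite spow_char.
- by move=> R'; rewrite spow_char.
Qed.


Definition post2 D (i o : nat) :=
  match o with 0 => IJlt 8 3 (exitpc D i + 2) | 2 => IAdd 8 3 0
  | _ => IJmp (segstart D i.+1) end.
Definition fin2 (o : nat) := if o is 0 then IOut 8 else IHalt.
Definition P2 D := P D (size D) (post2 D) fin2.

Definition qv D C i := gcount (perf (rot i D)) 0 C %/ size D.
Fixpoint maxq D C k := if k is k'.+1 then maxn (maxq D C k') (qv D C k') else 0.

Lemma loop2 D C : 0 < size D -> forall d k f, k + d = size D -> okr D C f ->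
  f 0 = 0 -> f 1 = size C -> f 6 = 1 -> f 7 = 2 -> f 8 = maxq D C k ->
  reachQ D (size D) (post2 D) fin2 C 0 (Config (segstart D k) f [::]) (d * (9 * size C + 9))
    (fun c => pc c = segstart D (size D) /\ outp c = [::] /\ regs c 8 = maxq D C (size D)).
Proof.
move=> sD; elim=> [|d IH] k f Hk Hf H0 H1 H6 H7 H8.
  rewrite addn0 in Hk; subst k.
  by apply: reachQ0 => //; split.
have Hks : k < size D by lia.
have -> : d.+1 * (9 * size C + 9) = 9 * size C + 5 + (4 + d * (9 * size C + 9)) by rewrite mulSn; lia.
apply: reachQ_trans.
  by apply: (@segment D (size D) (post2 D) fin2 C 0 k f [::]).
move=> [pc1 f1 o1] Hok [/= Hpc Ho Hcnt Hj Hfr]; subst.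
have F0 : f1 0 = 0 by rewrite Hfr.
have F1 : f1 1 = size C by rewrite Hfr.
have F6 : f1 6 = 1 by rewrite Hfr.
have F7 : f1 7 = 2 by rewrite Hfr.
have F8 : f1 8 = maxq D C k by rewrite Hfr.
have Fq : f1 3 = qv D C k by rewrite /qv -Hcnt divE.
have B3 : f1 3 + f1 0 <= size C + size D + 3 by have := Hok 3; rewrite /Bd F0 /=; lia.
case E: (f1 8 < f1 3).
- stX (IJlt 8 3 (exitpc D k + 2)) ltac:(apply: (@fetchPost D (size D) (post2 D) fin2 k 0) => //; lia) ltac:(rewrite ?E /=).
  stX (IAdd 8 3 0) ltac:(apply: (@fetchPost D (size D) (post2 D) fin2 k 2) => //; lia) idtac.
  stX (IJmp (segstart D k.+1)) ltac:(apply: (@fetchPost D (size D) (post2 D) fin2 k 3) => //; lia) idtac.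
  apply: (reachQ_mono (n := d * (9 * size C + 9))); first lia.
  apply: IH; rewrite ?updK /= ?F0 ?F1 ?F6 ?F7 //; try lia.
    apply: okr_upd => //; have := Hok 3; rewrite /Bd ?F0 /=; lia.
- stX (IJlt 8 3 (exitpc D k + 2)) ltac:(apply: (@fetchPost D (size D) (post2 D) fin2 k 0) => //; lia) ltac:(rewrite ?E /=).
  stX (IJmp (segstart D k.+1)) ltac:(apply: (@fetchPost D (size D) (post2 D) fin2 k 1) => //; lia) idtac.
  apply: (reachQ_mono (n := d * (9 * size C + 9))); first lia.
  apply: IH => //; try lia.
  by rewrite /= /maxn -F8 -Fq E.
Qed.

Lemma part2_run D C : 0 < size D ->
  runs_within (P2 D) C 0 (3 + size D * (9 * size C + 9) + 1) (nregs (P2 D) * bitlen (Bd D C))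
    [:: maxq D C (size D)].
Proof.
move=> sD.
apply: reach_runs => //.
have -> : 3 + size D * (9 * size C + 9) + 1 = (size D * (9 * size C + 9) + 1).+3 by lia.
apply: prelude => // f Hf H0 H1 H6 H7 Hr.
apply: reachQ_trans.
  apply: (loop2 sD (k := 0)) => //. by rewrite Hr.
move=> [pc1 f1 o1] Hok [/= Hpc [Ho H8]]; subst.
stX (IOut 8) ltac:(apply: (@fetchFin D (size D) (post2 D) fin2 0) => //; lia) idtac.
apply: reachQ0 => //; split.
  apply: halt_step. apply: (@fetchFin D (size D) (post2 D) fin2 1) => //; lia.
by rewrite /= H8.
Qed.

Lemma qv_le_maxq D C k i : i < k -> qv D C i <= maxq D C k.
Proof.
elim: k => [|k IH] //= Hi.
case: (ltnP i k) => H; first by have := IH H; lia.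
have -> : i = k by lia. lia.
Qed.

Lemma maxq_attain D C k : 0 < k -> exists2 i, i < k & maxq D C k = qv D C i.
Proof.
elim: k => [|k IH] //= _.
case: k IH => [|k] IH; first by exists 0 => //=; rewrite max0n.
have [i Hi E] := IH erefl.
case: (leqP (maxq D C k.+1) (qv D C k.+1)) => H.
  exists k.+1 => //; lia.
exists i; [lia | lia].
Qed.

Lemma part2 D : 0 < size D ->
  (exists (P : seq instr) (c : nat),
     forall C : seq sym,
       exists R : nat,
         [/\ runs_within P C 0 (c * size D * (size C).+1)
               (c * bitlen (size C)) [:: R],
             (exists2 i, i < size D & leq_star (spow (shift i D) R) C) &
             forall R', (exists2 i, i < size D & leq_star (spow (shift i D) R') C) ->
               R' <= R]).
Proof.
move=> sD.
exists (P2 D), (13 + nregs (P2 D) * (bitlen (size D + 3)).+1) => C.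
exists (maxq D C (size D)); split.
- apply: runs_mono (part2_run C sD).
    nia.
  apply: space_bound; lia.
- have [i Hi E] := maxq_attain D C sD.
  exists i => //. by rewrite /shift spow_char ?size_rot // E /qv.
- move=> R' [i Hi]; rewrite /shift spow_char ?size_rot // => H.
  exact: leq_trans H (qv_le_maxq D C Hi).
Qed.


Definition post3 D (i o : nat) :=
  match o with
  | 0 => IJltP 3 (segstart D i.+1)
  | 1 => IJgtP 3 (exitpc D i + 3)
  | 2 => IJlt 4 6 (segstart D i.+1)
  | 3 => IConst 9 i
  | 4 => IOut 9
  | _ => IJmp (segstart D i.+1) end.
Definition fin3 (o : nat) := IHalt.
Definition P3 D := P D (size D) (post3 D) fin3.

Definition cond D C r i := r * size D < gcount (perf (rot i D)) 0 C.

Ltac fP3 D k o := apply: (@fetchPost D (size D) (post3 D) fin3 k o) => //; lia.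

Lemma loop3 D C r : 0 < size D -> forall d k f o, k + d = size D -> okr D C f ->
  f 1 = size C -> f 6 = 1 -> f 7 = 2 ->
  reachQ D (size D) (post3 D) fin3 C r (Config (segstart D k) f o) (d * (9 * size C + 11))
    (fun c => pc c = segstart D (size D) /\ outp c = o ++ [seq i <- iota k d | cond D C r i]).
Proof.
move=> sD; elim=> [|d IH] k f o Hk Hf H1 H6 H7.
  rewrite addn0 in Hk; subst k.
  by apply: reachQ0 => //; split => //; rewrite cats0.
have Hks : k < size D by lia.
have -> : d.+1 * (9 * size C + 11) = 9 * size C + 5 + (6 + d * (9 * size C + 11)) by rewrite mulSn; lia.
apply: reachQ_trans.
  by apply: (@segment D (size D) (post3 D) fin3 C r k f o).
move=> [pc1 f1 o1] Hok [/= Hpc Ho Hcnt Hj Hfr]; subst.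
have F1 : f1 1 = size C by rewrite Hfr.
have F6 : f1 6 = 1 by rewrite Hfr.
have F7 : f1 7 = 2 by rewrite Hfr.
have Bk : k <= size C + size D + 3 by lia.
have Eio : iota k d.+1 = k :: iota k.+1 d by [].
have Hc : cond D C r k = (r < f1 3) || ((r == f1 3) && (0 < f1 4)).
  rewrite /cond -Hcnt. apply/idP/idP.
  - move=> H. case: (ltngtP r (f1 3)) => //= E.
    + have : (f1 3).+1 * size D <= r * size D by rewrite leq_mul2r E orbT.
      rewrite mulSn. lia.
    + rewrite E in H. lia.
  - case/orP.
    + move=> E. have : r.+1 * size D <= f1 3 * size D by rewrite leq_mul2r E orbT.
      rewrite mulSn. lia.
    + case/andP => /eqP -> H. lia.
have Hnext : forall n o' g, okr D C g -> g 1 = size C -> g 6 = 1 -> g 7 = 2 ->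
    o' = (if cond D C r k then rcons o k else o) ->
    d * (9 * size C + 11) <= n ->
    reachQ D (size D) (post3 D) fin3 C r (Config (segstart D k.+1) g o') n
    (fun c => pc c = segstart D (size D) /\
       outp c = o ++ (if cond D C r k then k :: [seq i <- iota k.+1 d | cond D C r i]
                      else [seq i <- iota k.+1 d | cond D C r i])).
  move=> n o' g Hg G1 G6 G7 Eo Hn.
  apply: reachQ_mono Hn _.
  apply: reachQ_weaken; last first.
    apply: IH => //; try lia.
  move=> c [Hp Hout]; split => //. rewrite Hout Eo.
  by case: (cond D C r k) => //; rewrite cat_rcons.
case E1: (f1 3 < r).
  have Hcf : cond D C r k = false by rewrite Hc; apply/negbTE; lia.
  stX (IJltP 3 (segstart D k.+1)) ltac:(fP3 D k 0) ltac:(rewrite ?E1 /=).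
  apply: Hnext => //; [by rewrite Hcf | lia].
case E2: (r < f1 3).
  have Hct : cond D C r k = true by rewrite Hc E2.
  stX (IJltP 3 (segstart D k.+1)) ltac:(fP3 D k 0) ltac:(rewrite ?E1 /=).
  stX (IJgtP 3 (exitpc D k + 3)) ltac:(fP3 D k 1) ltac:(rewrite ?E2 /=).
  stX (IConst 9 k) ltac:(fP3 D k 3) idtac.
  stX (IOut 9) ltac:(fP3 D k 4) idtac.
  stX (IJmp (segstart D k.+1)) ltac:(fP3 D k 5) idtac.
  apply: Hnext; rewrite ?updK //=; try lia.
    exact: okr_upd.
  by rewrite Hct.
case E3: (f1 4 < 1).
  have Hcf : cond D C r k = false by rewrite Hc E2 /=; apply/negbTE; lia.
  stX (IJltP 3 (segstart D k.+1)) ltac:(fP3 D k 0) ltac:(rewrite ?E1 /=).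
  stX (IJgtP 3 (exitpc D k + 3)) ltac:(fP3 D k 1) ltac:(rewrite ?E2 /=).
  stX (IJlt 4 6 (segstart D k.+1)) ltac:(fP3 D k 2) ltac:(rewrite ?F6 ?E3 /=).
  apply: Hnext => //; [by rewrite Hcf | lia].
have Hct : cond D C r k = true by rewrite Hc E2 /=; lia.
stX (IJltP 3 (segstart D k.+1)) ltac:(fP3 D k 0) ltac:(rewrite ?E1 /=).
stX (IJgtP 3 (exitpc D k + 3)) ltac:(fP3 D k 1) ltac:(rewrite ?E2 /=).
stX (IJlt 4 6 (segstart D k.+1)) ltac:(fP3 D k 2) ltac:(rewrite ?F6 ?E3 /=).
stX (IConst 9 k) ltac:(fP3 D k 3) idtac.
stX (IOut 9) ltac:(fP3 D k 4) idtac.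
stX (IJmp (segstart D k.+1)) ltac:(fP3 D k 5) idtac.
apply: Hnext; rewrite ?updK //=; try lia.
  exact: okr_upd.
by rewrite Hct.
Qed.

Lemma part3_run D C r : 0 < size D ->
  runs_within (P3 D) C r (3 + size D * (9 * size C + 11))
    (nregs (P3 D) * bitlen (Bd D C)) [seq i <- iota 0 (size D) | cond D C r i].
Proof.
move=> sD.
apply: reach_runs => //.
have -> : 3 + size D * (9 * size C + 11) = (size D * (9 * size C + 11)).+3 by lia.
apply: prelude => // f Hf H0 H1 H6 H7 Hr.
rewrite -[X in reachQ _ _ _ _ _ _ _ X]addn0.
apply: reachQ_trans.
  by apply: (loop3 r sD (k := 0)).
move=> [pc1 f1 o1] Hok [/= Hpc Ho]; subst.
apply: reachQ0 => //; split => //.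
apply: halt_step. apply: (@fetchFin D (size D) (post3 D) fin3 0) => //; lia.
Qed.

Lemma cond_char D C r i : i < size D ->
  leq_star (spow (shift i D) r ++ [:: nth Star D i]) C <-> cond D C r i.
Proof.
move=> Hi; rewrite /shift spow_last // leq_starE gmatch_pref /cond.
by [].
Qed.

Lemma part3 D : 0 < size D ->
  (exists (P : seq instr) (c : nat),
     forall (r : nat) (C : seq sym),
       exists Gamma : seq nat,
         runs_within P C r (c * size D * (size C).+1)
           (c * (size D * bitlen (size D) + bitlen (size C))) Gamma /\
         forall i, (i \in Gamma) <->
           (i < size D /\
            leq_star (spow (shift i D) r ++ [:: nth Star D i]) C)).
Proof.
move=> sD.
exists (P3 D), (14 + nregs (P3 D) * (bitlen (size D + 3)).+1) => r C.
exists [seq i <- iota 0 (size D) | cond D C r i]; split.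
- apply: runs_mono (part3_run C r sD).
    nia.
  apply: leq_trans (space_bound C _) _; first by apply: leqnn.
  apply: leq_mul => //; lia.
- move=> i; rewrite mem_filter mem_iota add0n /=.
  split.
  + case/andP => Hc Hi; split => //; exact/(cond_char C r Hi).
  + case=> Hi H; rewrite Hi andbT; exact/(cond_char C r Hi).
Qed.


Theorem lemma4p2 :
  forall D : seq sym, 0 < size D -> primitive D ->
  (* (1) *)
  (exists (P : seq instr) (c : nat),
     forall C : seq sym,
       exists R : nat,
         [/\ runs_within P C 0 (c * (size C).+1) (c * bitlen (size C)) [:: R],
             leq_star (spow D R) C &
             forall R', leq_star (spow D R') C -> R' <= R]) /\
  (* (2) *)
  (exists (P : seq instr) (c : nat),
     forall C : seq sym,
       exists R : nat,
         [/\ runs_within P C 0 (c * size D * (size C).+1)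
               (c * bitlen (size C)) [:: R],
             (exists2 i, i < size D & leq_star (spow (shift i D) R) C) &
             forall R', (exists2 i, i < size D & leq_star (spow (shift i D) R') C) ->
               R' <= R]) /\
  (* (3) *)
  (exists (P : seq instr) (c : nat),
     forall (r : nat) (C : seq sym),
       exists Gamma : seq nat,
         runs_within P C r (c * size D * (size C).+1)
           (c * (size D * bitlen (size D) + bitlen (size C))) Gamma /\
         forall i, (i \in Gamma) <->
           (i < size D /\
            leq_star (spow (shift i D) r ++ [:: nth Star D i]) C)).
Proof.
move=> D sD _; split; first exact: part1.
split; first exact: part2.
exact: part3.
Qed.
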